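(* Let $r\geq 2$ and $0<a<\frac{1}{r(r+1)}$. Let $X$ be a finite set of cardinality $n$ and let $A_1,\dots,A_{r+1}\subseteq X$ satisfy $$\sum_{i=1}^{r+1}|A_i|\geq\left(r-\frac1r-(r+1)a\right)n.$$ Then there exist $1\leq k<l\leq r+1$ with $$|A_k\cap A_l|\geq\left(\frac{r-2}{r}+\frac{2}{r^{2}(r+1)}-\frac{2(r-1)}{r}a\right)n.$$ *)

(* Defs.v *)
From mathcomp Require Import all_boot all_order all_algebra.

(* Main.v *)
Require Import Defs.
From mathcomp Require Import all_boot all_order all_algebra.
From mathcomp Require Import ring lra.
Import Order.TTheory GRing.Theory Num.Theory.
Local Open Scope ring_scope.

Lemma cardR (R : realFieldType) (T : finType) (B : {set T}) :
  (#|B|%:R : R) = \sum_x ((x \in B)%:R).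
Proof.
rewrite -sum1_card natr_sum big_mkcond /=; apply: eq_bigr => x _.
by case: (x \in B).
Qed.

Lemma pointwise (R : realFieldType) (D r : nat) :
  r%:R * (r%:R - 1) + 2 * (r%:R - 1) * (D%:R - r%:R) <= (D%:R : R) ^+ 2 - D%:R.
Proof.
case: (ltnP D r) => h.
- have h1 : (D%:R : R) + 1 <= r%:R by rewrite -[1]/(1%:R) -natrD ler_nat addn1.
  nra.
- have h1 : (r%:R : R) <= D%:R by rewrite ler_nat.
  nra.
Qed.

Theorem lemma4 (R : realFieldType) (r : nat) (a : R) (T : finType)
    (A : 'I_r.+1 -> {set T}) :
  (2 <= r)%N -> 0 < a -> a < 1 / (r%:R * (r%:R + 1)) ->
  \sum_(i < r.+1) (#|A i|)%:R >= (r%:R - 1 / r%:R - (r%:R + 1) * a) * (#|T|)%:R ->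
  exists k l : 'I_r.+1, (k < l)%N /\
    (#|A k :&: A l|)%:R >=
      ((r%:R - 2) / r%:R + 2 / (r%:R ^+ 2 * (r%:R + 1))
       - 2 * (r%:R - 1) / r%:R * a) * (#|T|)%:R.
Proof.
move=> r2 a0 _ hS.
set n : R := (#|T|)%:R.
set t : R := (_ - _) * n.
set c := fun k l : 'I_r.+1 => (#|A k :&: A l|%:R : R).
case: (boolP [exists k : 'I_r.+1, exists l : 'I_r.+1, (k < l)%N && (t <= c k l)]).
  case/existsP=> k /existsP [l /andP [kl tc]]; by exists k, l.
move=> hneg; exfalso.
have H : forall k l, k != l -> c k l < t.
  move=> k l kl.
  have H1 : forall k l : 'I_r.+1, (k < l)%N -> c k l < t.
    move=> k' l' kl'; rewrite ltNge; apply/negP => tc.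
    by move/negP: hneg; apply; apply/existsP; exists k'; apply/existsP; exists l'; rewrite kl' tc.
  case: (ltngtP k l) => [h|h|h]; first exact: H1.
  - by rewrite /c setIC; apply: H1.
  - by move/eqP: kl; case; apply: val_inj.
set f := fun (i : 'I_r.+1) (x : T) => ((x \in A i)%:R : R).
set d := fun x => \sum_i f i x.
have cE : forall k l, c k l = \sum_x f k x * f l x.
  move=> k l; rewrite /c cardR; apply: eq_bigr => x _.
  by rewrite /f inE; case: (x \in A k); case: (x \in A l); rewrite ?mulr1 ?mulr0.
set S := \sum_(i < r.+1) (#|A i|)%:R : R.
have E1 : \sum_k \sum_l c k l = \sum_x d x ^+ 2.
  under eq_bigr do under eq_bigr do rewrite cE.
  under eq_bigr do rewrite exchange_big /=.
  rewrite exchange_big /=; apply: eq_bigr => x _.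
  rewrite expr2 /d mulr_suml; apply: eq_bigr => k _.
  by rewrite mulr_sumr.
have E2 : S = \sum_x d x.
  rewrite /S /d exchange_big /=; apply: eq_bigr => i _.
  by rewrite cardR.
have Low : \sum_x (r%:R * (r%:R - 1) + 2 * (r%:R - 1) * (d x - r%:R)) <= \sum_x (d x ^+ 2 - d x).
  apply: ler_sum => x _.
  have -> : d x = (\sum_i (x \in A i : nat))%:R by rewrite natr_sum.
  exact: pointwise.
rewrite sumrB -E1 -E2 big_split /= sumr_const -mulr_sumr sumrB sumr_const -E2 in Low.
rewrite -[_ *+ #|T|]mulr_natr -[(r%:R : R) *+ #|T|]mulr_natr -/n in Low.
have Up : \sum_k \sum_l c k l < S + (r.+1)%:R * (r%:R * t).
  have -> : (r.+1)%:R * (r%:R * t) = \sum_(k < r.+1) (r%:R * t).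
    by rewrite sumr_const card_ord mulr_natl.
  rewrite /S -big_split /=.
  apply: ltr_sum; first by apply/hasP; exists ord0; rewrite ?mem_index_enum.
  move=> k _.
  rewrite (bigD1 k) //= /c setIid ltrD2l.
  have -> : r%:R * t = \sum_(l | l != k) t.
    rewrite (_ : \sum_(l | l != k) t = t *+ #|predC1 k|); last exact: sumr_const.
    by rewrite cardC1 card_ord /= mulr_natl.
  apply: ltr_sum => [|l lk]; last by apply: H; rewrite eq_sym.
  case: (eqVneq k ord0) => [->|hk]; apply/hasP; [exists ord_max| exists ord0];
    rewrite ?mem_index_enum //; last by rewrite eq_sym.
  by rewrite -val_eqE /= -lt0n (leq_trans _ r2).
rewrite -natr1 in Up.
have r2R : (2 : R) <= r%:R by rewrite (ler_nat R 2 r).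
have rn0 : (r%:R : R) != 0 by apply/eqP => h; rewrite h in r2R; lra.
have hk : 2 * (r%:R - 1) * ((r%:R - 1 / r%:R - (r%:R + 1) * a) * n - r%:R * n)
    <= 2 * (r%:R - 1) * (S - r%:R * n).
  by apply: ler_wpM2l; [lra | rewrite lerD2r; exact: hS].
have id : (r%:R + 1) * (r%:R * t) = r%:R * (r%:R - 1) * n
    + 2 * (r%:R - 1) * ((r%:R - 1 / r%:R - (r%:R + 1) * a) * n - r%:R * n).
  rewrite /t; field.
  by rewrite rn0 /=; apply: lt0r_neq0; lra.
move: Low Up hk id; set Q := \sum_k \sum_l c k l.
lra.
Qed.
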